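(* Let $n\ge2$ and let $\mathcal S$ be a branch of $\mathcal Q=\{x:x^TMx-2\beta^Tx+\gamma\le0\}$ in the hyperbolic case (one branch of a two-sheet hyperboloid or of a translated cone). Assume $\delta_{\inf}:=\inf\{x_n:x\in\mathcal S\}>-\infty$, but the infimum is either not attained or attained at more than one point of $\mathcal S$. Then $$\inf\{x_n:x\in\mathcal S\cap\mathbb Z^n\}-\delta_{\inf}\le1 .$$
   Context: Hyperbolic case: $M\in\mathbb S^n$ invertible with exactly one negative eigenvalue, $\beta\in\mathbb R^n$, $\gamma\in\mathbb R$, $q^*:=\beta^TM^{-1}\beta-\gamma\le0$; with $c_0=M^{-1}\beta$, $u$ a unit eigenvector of the negative eigenvalue and $C=\{y:y^TMy\le0,\ u^Ty\ge0\}$, the branches of $\mathcal Q$ are $c_0+(\{y:y^TMy\le q^*\}\cap C)$ and $c_0+(\{y:y^TMy\le q^*\}\cap(-C))$. *)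

(* Defs.v *)
From HB Require Import structures.
From mathcomp Require Import all_boot all_order all_algebra.
From mathcomp Require Import all_classical all_reals.
From mathcomp Require Import ereal.
Set Implicit Arguments. Unset Strict Implicit. Unset Printing Implicit Defensive.
Import Order.TTheory GRing.Theory Num.Theory.
Local Open Scope ring_scope.
Local Open Scope classical_set_scope.

Section Defs.
Variable R : realType.

Definition qform n (M : 'M[R]_n) (y : 'cV[R]_n) : R := (y^T *m M *m y) 0 0.

Definition qstar n (M : 'M[R]_n) (beta : 'cV[R]_n) (gamma : R) : R :=
  (beta^T *m invmx M *m beta) 0 0 - gamma.

Definition center n (M : 'M[R]_n) (beta : 'cV[R]_n) : 'cV[R]_n := invmx M *m beta.

Definition coneC n (M : 'M[R]_n) (u : 'cV[R]_n) : set 'cV[R]_n :=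
  [set y | qform M y <= 0 /\ 0 <= (u^T *m y) 0 0].

Definition branch n (M : 'M[R]_n) (beta : 'cV[R]_n) (gamma : R)
    (u : 'cV[R]_n) (s : bool) : set 'cV[R]_n :=
  [set x | let y := x - center M beta in
           qform M y <= qstar M beta gamma /\
           (if s then coneC M u y else coneC M u (- y))].

Definition intpt n (x : 'cV[R]_n) : Prop := forall i, x i 0 \is a Num.int.

Definition xlast n (x : 'cV[R]_n.+1) : R := x ord_max 0.

Definition inf_last n (A : set 'cV[R]_n.+1) : \bar R :=
  ereal_inf [set (xlast x)%:E | x in A].

End Defs.

(* Main.v *)
Require Import Defs.
From HB Require Import structures.
From mathcomp Require Import all_boot all_order all_algebra.
From mathcomp Require Import all_classical all_reals.
From mathcomp Require Import ereal.
From mathcomp Require Import ring lra.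
Import Order.TTheory GRing.Theory Num.Theory.
Local Open Scope ring_scope.
Local Open Scope classical_set_scope.

Set Implicit Arguments. Unset Strict Implicit. Unset Printing Implicit Defensive.

Section Lin.
Variables (R : realType) (N : nat).
Implicit Types (x y z : 'cV[R]_N).

Definition dot x y : R := (x^T *m y) 0 0.

Lemma dotE x y : dot x y = \sum_i x i 0 * y i 0.
Proof. by rewrite /dot !mxE; apply: eq_bigr => i _; rewrite !mxE. Qed.

Lemma dotC x y : dot x y = dot y x.
Proof. by rewrite !dotE; apply: eq_bigr => i _; rewrite mulrC. Qed.

Lemma dotDr x y z : dot x (y + z) = dot x y + dot x z.
Proof. by rewrite !dotE -big_split; apply: eq_bigr => i _; rewrite !mxE mulrDr. Qed.

Lemma dotDl x y z : dot (y + z) x = dot y x + dot z x.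
Proof. by rewrite dotC dotDr !(dotC x). Qed.

Lemma dotZr a x y : dot x (a *: y) = a * dot x y.
Proof. by rewrite !dotE mulr_sumr; apply: eq_bigr => i _; rewrite !mxE; ring. Qed.

Lemma dotZl a x y : dot (a *: y) x = a * dot y x.
Proof. by rewrite dotC dotZr dotC. Qed.

Lemma dotNr x y : dot x (- y) = - dot x y.
Proof. by rewrite -scaleN1r dotZr mulN1r. Qed.

Lemma dotNl x y : dot (- y) x = - dot y x.
Proof. by rewrite dotC dotNr dotC. Qed.

Lemma dotBr x y z : dot x (y - z) = dot x y - dot x z.
Proof. by rewrite dotDr dotNr. Qed.

Lemma dotBl x y z : dot (y - z) x = dot y x - dot z x.
Proof. by rewrite dotDl dotNl. Qed.

Lemma dot0r x : dot x 0 = 0.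
Proof. by rewrite dotE big1 // => i _; rewrite mxE mulr0. Qed.

Lemma dot0l x : dot 0 x = 0.
Proof. by rewrite dotC dot0r. Qed.

Lemma dot_ge0 x : 0 <= dot x x.
Proof. by rewrite dotE sumr_ge0 // => i _; rewrite -expr2 sqr_ge0. Qed.

Lemma dot_eq0 x : dot x x = 0 -> x = 0.
Proof.
rewrite dotE => /eqP; rewrite psumr_eq0; last by move=> i _; rewrite -expr2 sqr_ge0.
move=> /allP H; apply/matrixP => i j; rewrite (ord1 j) mxE.
by have /implyP := H i (mem_index_enum i); rewrite -expr2 sqrf_eq0 => /(_ isT)/eqP.
Qed.

Lemma discr (a b c : R) : 0 <= c -> (forall t, 0 <= a + 2 * b * t + c * t ^+ 2) ->
  b ^+ 2 <= a * c.
Proof.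
move=> c0 H; have a0 : 0 <= a by have := H 0; rewrite !mulr0 expr0n /= mulr0 !addr0.
have [cp|] := ltrP 0 c.
  have := H (- b / c); set t := - b / c => Ht.
  have ct : c * t = - b by rewrite /t mulrCA divff ?mulr1 // gt_eqF.
  nra.
rewrite le_eqVlt ltNge c0 orbF => /eqP c00; rewrite c00 mulr0.
have [b0|bn0] := eqVneq b 0; first by rewrite b0 expr0n.
have := H (- (a + 1) / (2 * b)); rewrite c00 mul0r addr0.
have -> : 2 * b * (- (a + 1) / (2 * b)) = - (a + 1).
  field; by rewrite bn0.
lra.
Qed.

Lemma CS x y : dot x y ^+ 2 <= dot x x * dot y y.
Proof.
apply: discr; first exact: dot_ge0.
move=> t; have := dot_ge0 (x + t *: y).
rewrite !dotDl !dotDr !dotZl !dotZr (dotC y x); lra.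
Qed.

Lemma AMGM x y : 2 * dot x y <= dot x x + dot y y.
Proof. have := dot_ge0 (x - y); rewrite !dotBl !dotBr (dotC y x); lra. Qed.

Lemma AMGM' x y : - (dot x x + dot y y) <= 2 * dot x y.
Proof. have := dot_ge0 (x + y); rewrite !dotDl !dotDr (dotC y x); lra. Qed.

Lemma mx_bound (A : 'M[R]_N) : exists K, 0 <= K /\ forall x, dot (A *m x) (A *m x) <= K * dot x x.
Proof.
exists (\sum_i dot (row i A)^T (row i A)^T); split.
  by apply: sumr_ge0 => i _; apply: dot_ge0.
move=> x; rewrite [dot (A *m x) _]dotE mulr_suml; apply: ler_sum => i _.
have -> : (A *m x) i 0 = dot (row i A)^T x.
  by rewrite dotE mxE; apply: eq_bigr => j _; rewrite !mxE.
by rewrite -expr2; apply: CS.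
Qed.

End Lin.


Lemma det_rank1 (K : comNzRingType) m (x y : 'cV[K]_m) :
  \det (1%:M + x *m y^T) = 1 + (y^T *m x) 0 0.
Proof.
pose L := block_mx (1%:M : 'M[K]_1) (- y^T) x (1%:M : 'M_m).
have E1 : L = block_mx 1%:M 0 x 1%:M *m block_mx 1%:M (- y^T) 0 (1%:M + x *m y^T).
  rewrite mulmx_block ?mul1mx ?mul0mx ?mulmx1 ?mulmx0 ?addr0 ?add0r.
  by rewrite mulmxN addrCA addNr addr0.
have E2 : L = block_mx (1%:M + y^T *m x) (- y^T) 0 1%:M *m block_mx 1%:M 0 x 1%:M.
  rewrite mulmx_block ?mul1mx ?mul0mx ?mulmx1 ?mulmx0 ?addr0 ?add0r.
  by rewrite mulNmx addrK.
have := congr1 determinant E1; rewrite E2 !det_mulmx.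
rewrite (det_lblock (1%:M : 'M[K]_1) x 1%:M) (det_ublock _ (- y^T)).
rewrite (det_ublock (1%:M : 'M[K]_1) (- y^T)).
rewrite !det1 !mul1r !mulr1 det_mx11 !mxE eqxx /= => ->.
by [].
Qed.

Lemma factor_char (K : comNzRingType) m (A P : 'M[K]_m) (x l : K) :
  P *m P = P -> A *m P = l *: P -> P *m A = l *: P ->
  x%:M - A = (1%:M + (x - l - 1) *: P) *m (P + (x%:M - A) *m (1%:M - P)).
Proof.
move=> PP AP PA; set D := x%:M - A.
have DP : D *m P = (x - l) *: P by rewrite /D mulmxBl AP mul_scalar_mx scalerBl.
have PD : P *m D = (x - l) *: P by rewrite /D mulmxBr PA mul_mx_scalar scalerBl.
have E : D *m (1%:M - P) = D - (x - l) *: P by rewrite mulmxBr mulmx1 DP.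
rewrite E mulmxDl mul1mx -scalemxAl mulmxDr mulmxBr PP PD.
rewrite -scalemxAr PP subrr addr0.
apply/matrixP => i j; rewrite !mxE; ring.
Qed.


Lemma mx11_dot (R : realType) N (x y : 'cV[R]_N) : x^T *m y = (dot x y)%:M.
Proof. exact: mx11_scalar. Qed.

Lemma scalar0_11 (R : realType) : (0 : R)%:M = 0 :> 'M[R]_1.
Proof. by apply/matrixP => i j; rewrite !mxE mul0rn. Qed.

Section Mult.
Variables (R : realType) (n : nat) (M : 'M[R]_n.+1) (lam : R) (u z : 'cV[R]_n.+1).
Hypotheses (HMs : M^T = M) (Heig : M *m u = lam *: u) (Hu : dot u u = 1)
  (Hz : M *m z = lam *: z) (Huz : dot u z = 0) (Hz0 : z != 0).

Lemma mult2 : (2 <= mup lam (char_poly M))%N.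
Proof.
have hz : dot z z != 0 by apply/eqP => /dot_eq0 /eqP; apply/negP.
pose z2 := (dot z z)^-1 *: z.
pose U1 := u *m u^T; pose U2 := z2 *m z^T; pose P := U1 + U2.
have uu : u^T *m u = 1%:M by rewrite mx11_dot Hu.
have zz : z^T *m z2 = 1%:M by rewrite mx11_dot dotZr mulVf.
have uz : u^T *m z2 = 0 by rewrite mx11_dot dotZr Huz mulr0 scalar0_11.
have zu : z^T *m u = 0 by rewrite mx11_dot dotC Huz scalar0_11.
have U11 : U1 *m U1 = U1 by rewrite /U1 mulmxA -(mulmxA u) uu mulmx1.
have U22 : U2 *m U2 = U2 by rewrite /U2 mulmxA -(mulmxA z2) zz mulmx1.
have U12 : U1 *m U2 = 0 by rewrite /U1 /U2 mulmxA -(mulmxA u) uz mulmx0 mul0mx.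
have U21 : U2 *m U1 = 0 by rewrite /U1 /U2 mulmxA -(mulmxA z2) zu mulmx0 mul0mx.
have PP : P *m P = P.
  by rewrite /P mulmxDl !mulmxDr U11 U22 U12 U21 addr0 add0r.
have uM : u^T *m M = lam *: u^T.
  by rewrite -{1}HMs -trmx_mul Heig linearZ.
have zM : z^T *m M = lam *: z^T.
  by rewrite -{1}HMs -trmx_mul Hz linearZ.
have Mz2 : M *m z2 = lam *: z2 by rewrite /z2 -scalemxAr Hz !scalerA mulrC.
have MP : M *m P = lam *: P.
  by rewrite /P mulmxDr /U1 /U2 !mulmxA Heig Mz2 -!scalemxAl scalerDr.
have PM : P *m M = lam *: P.
  by rewrite /P mulmxDl /U1 /U2 -!mulmxA uM zM -!scalemxAr scalerDr.
have PPp : (map_mx polyC P) *m (map_mx polyC P) = (map_mx polyC P) by rewrite -map_mxM PP.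
have MPp : (map_mx polyC M) *m (map_mx polyC P) = lam%:P *: (map_mx polyC P) by rewrite -map_mxM MP map_mxZ.
have PMp : (map_mx polyC P) *m (map_mx polyC M) = lam%:P *: (map_mx polyC P) by rewrite -map_mxM PM map_mxZ.
pose c := 'X - lam%:P - 1.
have Hf := factor_char 'X PPp MPp PMp.
have E : char_poly M = \det (1%:M + c *: (map_mx polyC P)) *
    \det ((map_mx polyC P) + ('X%:M - (map_mx polyC M)) *m (1%:M - (map_mx polyC P))).
  by rewrite -det_mulmx -Hf.
have E1 : 1%:M + c *: (map_mx polyC P) = (1%:M + c *: (map_mx polyC U1)) *m (1%:M + c *: (map_mx polyC U2)).
  rewrite mulmxDl mul1mx mulmxDr mulmx1 -scalemxAl -scalemxAr -map_mxM U12.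
  by rewrite map_mx0 !scaler0 addr0 /P map_mxD scalerDr addrA addrAC.
have D1 : \det (1%:M + c *: (map_mx polyC U1)) = 'X - lam%:P.
  rewrite /U1 map_mxM -map_trmx scalemxAl det_rank1 -scalemxAr mxE.
  rewrite map_trmx -map_mxM uu map_mx1 mxE eqxx mulr1n /c; ring.
have D2 : \det (1%:M + c *: (map_mx polyC U2)) = 'X - lam%:P.
  rewrite /U2 map_mxM -map_trmx scalemxAl det_rank1 -scalemxAr mxE.
  rewrite map_trmx -map_mxM zz map_mx1 mxE eqxx mulr1n /c; ring.
rewrite mup_geq; last exact: monic_neq0 (char_poly_monic M).
rewrite E E1 det_mulmx D1 D2 expr2.
exact: dvdp_mulr (dvdpp _).
Qed.

End Mult.


Lemma dot_gt0 (R : realType) N (x : 'cV[R]_N) : x != 0 -> 0 < dot x x.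
Proof.
move=> x0; rewrite lt_def dot_ge0 andbT; apply/eqP => /dot_eq0 /eqP.
by apply/negP.
Qed.

Lemma dot_symM (R : realType) N (A : 'M[R]_N) x y : A^T = A ->
  dot x (A *m y) = dot (A *m x) y.
Proof. by move=> HA; rewrite /dot mulmxA trmx_mul HA. Qed.

Section WPD.
Variables (R : realType) (n : nat) (M : 'M[R]_n.+1) (lam : R) (u : 'cV[R]_n.+1).
Hypotheses (HMs : M^T = M) (HMu : M \in unitmx) (Hlam : lam < 0)
  (Hmup : mup lam (char_poly M) = 1%N)
  (Hneg : forall mu : R, mu < 0 -> eigenvalue M mu -> mu = lam)
  (Heig : M *m u = lam *: u) (Hu : dot u u = 1).

Local Notation Q y := (dot y (M *m y)).

Lemma Mu_dot y : dot u (M *m y) = lam * dot u y.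
Proof. by rewrite dot_symM // Heig dotZl. Qed.

Lemma W_PD w : dot u w = 0 -> w != 0 -> 0 < Q w.
Proof.
move=> uw0 w0; rewrite ltNge; apply/negP => Qw0.
have [KM [KM0 HKM]] := mx_bound M.
pose W := [set v : 'cV[R]_n.+1 | dot u v = 0 /\ v != 0].
pose E := [set Q v / dot v v | v in W].
pose m := inf E.
have Ene : E !=set0 by exists (Q w / dot w w); exists w.
have Qlb v : - ((1 + KM) / 2) * dot v v <= Q v.
  have := AMGM' v (M *m v); have := HKM v; have := dot_ge0 v; nra.
have Elb : has_lbound E.
  exists (- ((1 + KM) / 2)) => r [v [_ v0] <-].
  have dp := dot_gt0 v0; rewrite ler_pdivlMr //; exact: Qlb.
have Hi v : dot u v = 0 -> m * dot v v <= Q v.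
  move=> uv; have [->|v0] := eqVneq v 0; first by rewrite !dot0l mulr0.
  have dp := dot_gt0 v0.
  have : m <= Q v / dot v v by apply: ge_inf => //; exists v.
  by rewrite ler_pdivlMr.
have m0 : m <= 0.
  have : m <= Q w / dot w w by apply: ge_inf => //; exists w.
  have dp := dot_gt0 w0; move=> h; apply: (le_trans h).
  by rewrite mulr_le0_ge0 // invr_ge0 ltW.
have Hiii eta : 0 < eta -> exists v, [/\ dot u v = 0, v != 0 & Q v < (m + eta) * dot v v].
  move=> e0; have : inf E < m + eta by rewrite ltrDl.
  move=> /(inf_lt Ene) [_ [v [uv v0] <-]] h; exists v; split => //.
  by rewrite -ltr_pdivrMr // dot_gt0.
pose A := M - m%:M.
pose c := 1 - lam + m.
pose A' := A + c *: (u *m u^T).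
have HAs : A^T = A by rewrite /A linearB /= HMs tr_scalar_mx.
have HA's : A'^T = A' by rewrite /A' linearD /= HAs linearZ /= trmx_mul trmxK.
have Au v : A *m v = M *m v - m *: v by rewrite /A mulmxBl mul_scalar_mx.
have Q_A v : dot v (A *m v) = Q v - m * dot v v by rewrite Au dotBr dotZr.
have A'v v : dot u v = 0 -> A' *m v = A *m v.
  move=> uv; rewrite /A' mulmxDl -scalemxAl -mulmxA mx11_dot uv scalar0_11.
  by rewrite mulmx0 scaler0 addr0.
have uAv v : dot u (A *m v) = (lam - m) * dot u v.
  by rewrite Au dotBr Mu_dot dotZr; ring.
have psd v : dot u v = 0 -> 0 <= dot v (A *m v).
  by move=> uv; rewrite Q_A; have := Hi v uv; lra.
have CSA x y : dot u x = 0 -> dot u y = 0 ->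
    dot x (A *m y) ^+ 2 <= dot x (A *m x) * dot y (A *m y).
  move=> ux uy; apply: discr; first exact: psd.
  move=> t; have := psd (x + t *: y).
  rewrite dotDr dotZr ux uy mulr0 addr0 => /(_ erefl).
  rewrite mulmxDr -scalemxAr !dotDl !dotDr !dotZl !dotZr.
  rewrite (dotC y (A *m x)) -(dot_symM _ _ HAs); lra.
case: (boolP (A' \in unitmx)) => HA'.
  have [K2 [K20 HK2]] := mx_bound (invmx A').
  have [K1 [K10 HK1]] := mx_bound A.
  pose L := K2 * ((1 + K1) / 2).
  have L0 : 0 <= L by rewrite /L mulr_ge0 // divr_ge0 //; lra.
  have key v : dot u v = 0 -> dot v v <= L * dot v (A *m v).
    move=> uv.
    have h1 : dot v v <= K2 * dot (A *m v) (A *m v).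
      by have := HK2 (A' *m v); rewrite mulKmx // A'v.
    have a0 : 0 <= dot (A *m v) (A *m v) by apply: dot_ge0.
    have b0 : 0 <= dot v (A *m v) by apply: psd.
    have h2 : dot (A *m v) (A *m v) ^+ 2 <=
        ((1 + K1) / 2) * dot (A *m v) (A *m v) * dot v (A *m v).
      have := CSA (A *m v) v; rewrite uAv uv mulr0 => /(_ erefl erefl) h.
      have := AMGM (A *m v) (A *m (A *m v)); have := HK1 (A *m v).
      nra.
    have k0 : 0 < (1 + K1) / 2 by rewrite divr_gt0 //; lra.
    have h3 : dot (A *m v) (A *m v) <= ((1 + K1) / 2) * dot v (A *m v).
      have [->|ap] := eqVneq (dot (A *m v) (A *m v)) 0; first by nra.
      have ap' : 0 < dot (A *m v) (A *m v) by rewrite lt_def ap a0.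
      nra.
    rewrite /L; nra.
  pose eta := 1 / (L + 1).
  have eta0 : 0 < eta by rewrite /eta divr_gt0 //; lra.
  have etaL : eta * (L + 1) = 1 by rewrite /eta mul1r mulVf //; apply/eqP; lra.
  have [v [uv v0 Hv]] := Hiii eta eta0.
  have := key v uv; rewrite Q_A; have := dot_gt0 v0; have := Hi v uv.
  nra.
have : \det A' == 0 by move: HA'; rewrite unitmxE unitfE negbK.
move=> /det0P [v v0 vA].
pose z := v^T.
have Az : A' *m z = 0 by rewrite /z -HA's -trmx_mul vA trmx0.
have z0 : z != 0 by rewrite /z trmx_eq0.
have uz : dot u z = 0.
  have := congr1 (dot u) Az; rewrite dot0r /A' mulmxDl -scalemxAl -mulmxA mx11_dot.
  rewrite dotDr dotZr uAv mul_mx_scalar dotZr Hu.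
  have -> : (lam - m) * dot u z + c * (dot u z * 1) = dot u z by rewrite /c; ring.
  by [].
have Mz : M *m z = m *: z.
  by move: Az; rewrite A'v // Au => /eqP; rewrite subr_eq0 => /eqP.
case: (ltrgtP m 0) => hm.
- have em : eigenvalue M m.
    apply/eigenvalueP; exists v => //.
    by rewrite -[v]trmxK -/z -{1}HMs -trmx_mul Mz linearZ.
  have ml := Hneg hm em.
  rewrite ml in Mz.
  have := mult2 HMs Heig Hu Mz uz z0.
  by rewrite Hmup.
- by move: m0; rewrite leNgt hm.
- rewrite hm scale0r in Mz.
  by move: z0; rewrite -(mulKmx HMu z) Mz mulmx0 eqxx.
Qed.

End WPD.


Section Geo.
Variables (R : realType) (n : nat) (M : 'M[R]_n.+1) (lam : R) (u : 'cV[R]_n.+1).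
Hypotheses (HMs : M^T = M) (HMu : M \in unitmx) (Hlam : lam < 0)
  (Hmup : mup lam (char_poly M) = 1%N)
  (Hneg : forall mu : R, mu < 0 -> eigenvalue M mu -> mu = lam)
  (Heig : M *m u = lam *: u) (Hu : dot u u = 1).

Local Notation Bf x y := (dot x (M *m y)).
Local Notation Q y := (dot y (M *m y)).
Definition Cc (y : 'cV[R]_n.+1) := Q y <= 0 /\ 0 <= dot u y.

Lemma Bsym x y : Bf x y = Bf y x.
Proof. by rewrite dot_symM // dotC. Qed.

Lemma BDr x y z : Bf x (y + z) = Bf x y + Bf x z.
Proof. by rewrite mulmxDr dotDr. Qed.
Lemma BDl x y z : Bf (y + z) x = Bf y x + Bf z x.
Proof. by rewrite dotDl. Qed.
Lemma BZr a x y : Bf x (a *: y) = a * Bf x y.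
Proof. by rewrite -scalemxAr dotZr. Qed.
Lemma BZl a x y : Bf (a *: y) x = a * Bf y x.
Proof. by rewrite dotZl. Qed.
Lemma BNr x y : Bf x (- y) = - Bf x y.
Proof. by rewrite -scaleN1r BZr mulN1r. Qed.
Lemma BNl x y : Bf (- y) x = - Bf y x.
Proof. by rewrite dotNl. Qed.
Lemma BBr x y z : Bf x (y - z) = Bf x y - Bf x z.
Proof. by rewrite BDr BNr. Qed.
Lemma BBl x y z : Bf (y - z) x = Bf y x - Bf z x.
Proof. by rewrite BDl BNl. Qed.

Lemma QD x y : Q (x + y) = Q x + 2 * Bf x y + Q y.
Proof. rewrite BDl !BDr (Bsym y x); ring. Qed.

Lemma QZ a x : Q (a *: x) = a ^+ 2 * Q x.
Proof. rewrite BZl BZr; ring. Qed.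

Lemma Bu y : Bf u y = lam * dot u y.
Proof. exact: Mu_dot. Qed.
Lemma Bu' y : Bf y u = lam * dot u y.
Proof. by rewrite Bsym Bu. Qed.

Lemma decomp_u y : dot u (y - dot u y *: u) = 0.
Proof. by rewrite dotBr dotZr Hu mulr1 subrr. Qed.

Lemma decompB y z : Bf y z = lam * dot u y * dot u z +
   Bf (y - dot u y *: u) (z - dot u z *: u).
Proof.
rewrite !BBl !BBr !BZl !BZr !Bu !Bu' Hu; ring.
Qed.

Lemma PSD w : dot u w = 0 -> 0 <= Q w.
Proof.
move=> uw; have [->|w0] := eqVneq w 0; first by rewrite dot0l.
exact: (ltW (W_PD HMs HMu Hmup Hneg Heig Hu uw w0)).
Qed.

Lemma CSW w v : dot u w = 0 -> dot u v = 0 -> Bf w v ^+ 2 <= Q w * Q v.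
Proof.
move=> uw uv; apply: discr; first exact: PSD.
move=> t; have := @PSD (w + t *: v).
rewrite dotDr dotZr uw uv mulr0 addr0 => /(_ erefl).
rewrite QD QZ BZr; lra.
Qed.

Lemma F1 y z : Cc y -> Cc z -> Bf y z <= 0.
Proof.
move=> [Qy uy] [Qz uz].
have dy := decompB y y; have dz := decompB z z; rewrite decompB.
have cs := CSW (decomp_u y) (decomp_u z).
have pw := PSD (decomp_u y); have pv := PSD (decomp_u z).
move: dy dz cs pw pv uy uz Qy Qz.
set a := dot u y; set b := dot u z.
set w := y - a *: u; set v := z - b *: u.
move=> dy dz cs pw pv uy uz Qy Qz.
have hw : Q w <= - lam * a ^+ 2 by lra.
have hv : Q v <= - lam * b ^+ 2 by lra.
have hp : Q w * Q v <= (lam * a * b) ^+ 2.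
  have : Q w * Q v <= (- lam * a ^+ 2) * (- lam * b ^+ 2).
    by apply: ler_pM.
  move=> h; apply: (le_trans h); rewrite le_eqVlt; apply/orP; left; apply/eqP; ring.
have ab : 0 <= - lam * a * b by rewrite -mulrA mulr_ge0 ?mulr_ge0 // oppr_ge0 ltW.
nra.
Qed.

Lemma F2 g r : Q g < 0 -> Bf g r = 0 -> r = 0 \/ 0 < Q r.
Proof.
move=> Qg Bgr.
have [Qr|Qr] := ltrP 0 (Q r); first by right.
left.
have dg := decompB g g; have dr := decompB r r; rewrite decompB in Bgr.
have cs := CSW (decomp_u g) (decomp_u r).
have pw := PSD (decomp_u g); have pv := PSD (decomp_u r).
move: dg dr cs pw pv Bgr Qg Qr.
set a := dot u g; set b := dot u r.
set w := g - a *: u; set v := r - b *: u.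
move=> dg dr cs pw pv Bgr Qg Qr.
have b0 : b = 0.
  apply/eqP; apply/negPn/negP => bn0.
  have b2 : 0 < b ^+ 2 by rewrite exprn_even_gt0.
  have hw : Q w < - lam * a ^+ 2 by lra.
  have hv : Q v <= - lam * b ^+ 2 by lra.
  have e1 : Bf w v = - (lam * a * b) by lra.
  have : Q w * Q v <= Q w * (- lam * b ^+ 2) by apply: ler_wpM2l.
  have : Q w * (- lam * b ^+ 2) < (- lam * a ^+ 2) * (- lam * b ^+ 2).
    by rewrite ltr_pM2r ?hw // mulr_gt0 // oppr_gt0.
  move: cs; rewrite e1; nra.
have Qv0 : Q v = 0 by move: dr; rewrite b0 => dr; lra.
have -> : r = v by rewrite /v b0 scale0r subr0.
apply/eqP; apply/negPn/negP => v0.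
have := W_PD HMs HMu Hmup Hneg Heig Hu (decomp_u r) v0.
by rewrite -/v Qv0 ltxx.
Qed.

End Geo.


Lemma dot_delta (R : realType) n (x : 'cV[R]_n.+1) :
  dot (delta_mx ord_max 0) x = x ord_max 0.
Proof.
rewrite dotE (bigD1 ord_max) //= big1 => [|i ni]; first by rewrite !mxE !eqxx mul1r addr0.
by rewrite !mxE (negbTE ni) mul0r.
Qed.

Section Core.
Variables (R : realType) (n : nat) (M : 'M[R]_n.+1) (lam : R) (u : 'cV[R]_n.+1).
Hypotheses (HMs : M^T = M) (HMu : M \in unitmx) (Hlam : lam < 0)
  (Hmup : mup lam (char_poly M) = 1%N)
  (Hneg : forall mu : R, mu < 0 -> eigenvalue M mu -> mu = lam)
  (Heig : M *m u = lam *: u) (Hu : dot u u = 1).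

Local Notation Bf x y := (dot x (M *m y)).
Local Notation Q y := (dot y (M *m y)).
Local Notation C := (Cc M u).

Let F1' := F1 HMs HMu Hlam Hmup Hneg Heig Hu.
Let F2' := F2 HMs HMu Hlam Hmup Hneg Heig Hu.
Let W_PD' := W_PD HMs HMu Hmup Hneg Heig Hu.
Let QD' := QD HMs.
Let Bsym' := Bsym HMs.

Lemma core (q : R) (c0 : 'cV[R]_n.+1) (S : set 'cV[R]_n.+1) :
  q <= 0 ->
  (forall x, S x <-> Q (x - c0) <= q /\ C (x - c0)) ->
  (-oo < inf_last S)%E ->
  ~ (exists x, S x /\ (xlast x)%:E = inf_last S /\
       forall y, S y -> (xlast y)%:E = inf_last S -> y = x) ->
  (inf_last (S `&` [set x | intpt x]) <= inf_last S + 1%:E)%E.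
Proof.
move=> q0 HS Hfin Huniq.
pose e : 'cV[R]_n.+1 := delta_mx ord_max 0.
have xlE x : xlast x = dot e x by rewrite dot_delta.
have hlam := Hlam.
have S_add x z : S x -> C z -> S (x + z).
  move=> /HS [Hq [Qy uy]] [Qz uz]; apply/HS.
  have -> : x + z - c0 = (x - c0) + z by rewrite addrAC.
  have := F1' (conj Qy uy) (conj Qz uz).
  rewrite /Cc QD' dotDr; split; [lra|split; lra].
have C_scale t z : 0 <= t -> C z -> C (t *: z).
  move=> t0 [Qz uz]; rewrite /Cc dotZl dotZr -scalemxAr dotZr.
  split; [rewrite mulrA; apply: mulr_ge0_le0 => //; exact: mulr_ge0|exact: mulr_ge0].
pose t0 := 1 + q / lam.
have t01 : 1 <= t0 by rewrite /t0 lerDl; apply: mulr_le0 => //; rewrite invr_le0 ltW.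
pose x0 := c0 + t0 *: u.
have Sx0 : S x0.
  apply/HS; rewrite /Cc /x0 addrAC subrr add0r -scalemxAr !dotZl !dotZr Heig !dotZr Hu.
  have : lam * t0 = lam + q by rewrite /t0 mulrDr mulr1 mulrCA divff ?mulr1 // lt_eqF.
  move=> h; rewrite !mulr1.
  have h2 : t0 * (t0 * lam) <= q by nra.
  split => //; split; [lra|lra].
have [d Hd] : exists d, inf_last S = d%:E.
  have hub : (inf_last S <= (xlast x0)%:E)%E by apply: ereal_inf_lbound; exists x0.
  move: Hfin hub; case: (inf_last S) => [r| |] //; by exists r.
have lb x : S x -> d <= xlast x.
  move=> Sx; have : (inf_last S <= (xlast x)%:E)%E by apply: ereal_inf_lbound; exists x.
  by rewrite Hd lee_fin.
have approx r : d < r -> exists x, S x /\ xlast x < r.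
  move=> dr; have : (inf_last S < r%:E)%E by rewrite Hd lte_fin.
  by move/ereal_inf_lt => [_ [x Sx <-]]; rewrite lte_fin => h; exists x.
have neg_dir z : C z -> dot e z < 0 -> False.
  move=> Cz ez.
  pose t := (xlast x0 - d + 1) / (- dot e z).
  have hx0 := lb x0 Sx0.
  have tp : 0 <= t by rewrite /t divr_ge0 //; lra.
  have := lb (x0 + t *: z) (S_add _ _ Sx0 (C_scale t z tp Cz)).
  rewrite xlE dotDr dotZr -xlE.
  have -> : t * dot e z = - (xlast x0 - d + 1).
    rewrite /t; field; apply/eqP; lra.
  lra.
pose g := invmx M *m e.
have Mg : M *m g = e by rewrite mulKVmx.
pose Qinv := dot e g. pose eps := dot u e.
have eB y : Bf g y = dot e y by rewrite dot_symM // Mg.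
have Qg : Q g = Qinv by rewrite Mg dotC.
have ug : lam * dot u g = eps by rewrite -(Bu HMs Heig) Mg.
have eu : dot e u = eps by rewrite dotC.
have Qu : Q u = lam by rewrite (Bu HMs Heig) Hu mulr1.
have Qab a b : Q (a *: u + b *: g) = a ^+ 2 * lam + 2 * a * b * eps + b ^+ 2 * Qinv.
  rewrite QD' !QZ Qu Qg !dotZl -!scalemxAr !dotZr Mg; rewrite -/eps; ring.
have uab a b : dot u (a *: u + b *: g) = a + b * dot u g.
  by rewrite dotDr !dotZr Hu mulr1.
have eab a b : dot e (a *: u + b *: g) = a * eps + b * Qinv.
  by rewrite dotDr !dotZr eu.
have Qinv_le0 : Qinv <= 0.
  rewrite leNgt; apply/negP => Qp.
  have [ep|ep] := ltrP 0 eps.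
    pose al := Qinv / (2 * eps).
    have ale : al * eps = Qinv / 2 by rewrite /al; field; apply/eqP; lra.
    have alp : 0 < al by rewrite /al divr_gt0 //; lra.
    apply: (neg_dir (al *: u + (-1) *: g)); last by rewrite eab; lra.
    rewrite /Cc Qab uab; split; nra.
  pose al := 1 + (Qinv - 2 * eps) / (- lam).
  have ale : al * (- lam) = - lam + Qinv - 2 * eps.
    by rewrite /al; field; apply/eqP; lra.
  have al1 : 1 <= al by rewrite /al lerDl divr_ge0 //; lra.
  apply: (neg_dir (al *: u + (-1) *: g)); last by rewrite eab; nra.
  rewrite /Cc Qab uab; split; nra.
have eps_pos : 0 < eps.
  have [ep|ep|ep] := ltrgtP 0 eps => //.
    exfalso; apply: (neg_dir u); last by rewrite eu.
    by split; [rewrite Qu ltW|rewrite Hu].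
  exfalso.
  have ug0 : dot u g = 0.
    by apply/eqP; move: (ug); rewrite -ep => /eqP; rewrite mulf_eq0 (lt_eqF hlam).
  have g0 : g != 0.
    apply/eqP => g0; have := Mg; rewrite g0 mulmx0 => e0.
    have : e ord_max 0 = 1 by rewrite /e mxE !eqxx.
    by rewrite -e0 mxE => /eqP; rewrite eq_sym oner_eq0.
  have := W_PD' ug0 g0; rewrite Qg; lra.
have dug : dot u g < 0 by nra.
have Cmg : C (- g).
  split; first by rewrite mulmxN dotNl dotNr opprK Qg.
  by rewrite dotNr oppr_ge0 ltW.
have [Qn|Qp] := ltrP Qinv 0.
  exfalso; apply: Huniq.
  pose s := Num.sqrt (q / Qinv).
  have s0 : 0 <= s := sqrtr_ge0 _.
  have qQ : 0 <= q / Qinv by apply: mulr_le0 => //; rewrite invr_le0 ltW.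
  have ss : s ^+ 2 * Qinv = q by rewrite sqr_sqrtr // divfK // lt_eqF.
  pose ys := 0 *: u + (- s) *: g.
  pose xs := c0 + ys.
  have xsc : xs - c0 = ys by rewrite /xs addrAC subrr add0r.
  have Qys : Q ys = q by rewrite Qab -ss; ring.
  have uys : dot u ys = - s * dot u g by rewrite uab add0r.
  have eys : dot e ys = - s * Qinv by rewrite eab mul0r add0r.
  have Sxs : S xs.
    apply/HS; rewrite xsc /Cc Qys uys; split => //; split => //; nra.
  have key x : S x -> dot e ys <= dot e (x - c0) /\ (dot e (x - c0) = dot e ys -> x = xs).
    move=> /HS [Hq [Qy uy]].
    have yE : x - c0 = ((dot e (x - c0 - ys) / Qinv) - s) *: g +
        ((x - c0 - ys) - (dot e (x - c0 - ys) / Qinv) *: g).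
      by rewrite /ys; apply/matrixP => i j; rewrite !mxE; ring.
    move: Hq Qy uy yE.
    set y := x - c0; set tau := dot e (y - ys) / Qinv; set r := (y - ys) - tau *: g.
    move=> Hq Qy uy yE.
    have eBr : Bf g r = 0.
      by rewrite eB /r dotBr dotZr /tau -/Qinv divfK ?subrr // lt_eqF.
    have Qr0 : 0 <= Q r.
      have QgN : Q g < 0 by rewrite Qg.
      case: (F2' QgN eBr) => [->|/ltW //]; by rewrite dot0l.
    have QyE : Q y = (tau - s) ^+ 2 * Qinv + Q r.
      by rewrite {1 2}yE QD' QZ Qg BZl eBr mulr0 mulr0 addr0.
    have eyE : dot e y = (tau - s) * Qinv.
      by rewrite yE dotDr dotZr -(eB r) eBr addr0.
    have tau_le : tau <= 0.
      rewrite leNgt; apply/negP => tp.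
      have hq : (tau - s) ^+ 2 * Qinv + Q r <= s ^+ 2 * Qinv by rewrite -QyE ss.
      have h1 : s ^+ 2 <= (tau - s) ^+ 2 by nra.
      have h2 : 0 < tau - s by nra.
      have := F1' (conj Qy uy) Cmg.
      rewrite mulmxN dotNr (Bsym' y g) eB eyE; nra.
    split; first by rewrite eyE eys; nra.
    move=> heq.
    have tau0 : tau = 0.
      have : tau * Qinv = 0.
        have -> : tau * Qinv = (tau - s) * Qinv + s * Qinv by ring.
        by rewrite -eyE heq eys; ring.
      by move/eqP; rewrite mulf_eq0 (lt_eqF Qn) orbF => /eqP.
    have Qrle : Q r <= 0.
      by move: Hq; rewrite QyE tau0 -ss sub0r sqrrN; lra.
    have r0 : r = 0.
      have QgN : Q g < 0 by rewrite Qg.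
      case: (F2' QgN eBr) => [//|h]; exfalso; lra.
    have yys : y = ys by rewrite yE tau0 r0 sub0r addr0 /ys scale0r add0r.
    by rewrite /xs -yys /y addrC subrK.
  have split_e x : dot e x = dot e c0 + dot e (x - c0).
    by rewrite dotBr addrC subrK.
  have xlxs : xlast xs = d.
    apply/eqP; rewrite eq_le lb // andbT leNgt; apply/negP => /approx [x [Sx hx]].
    have [h _] := key x Sx.
    move: hx; rewrite !xlE (split_e x) (split_e xs) xsc; lra.
  exists xs; split => //; split; first by rewrite Hd xlxs.
  move=> y Sy; rewrite Hd -xlxs => -[hy].
  have [_ h] := key y Sy; apply: h.
  move: hy; rewrite !xlE (split_e y) (split_e xs) xsc; lra.
have Q0 : Qinv = 0 by apply/eqP; rewrite eq_le Qinv_le0 Qp.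
pose k : int := Num.floor d + 1.
pose kR : R := k%:~R.
have dk : d < kR by rewrite /kR /k; exact: floorD1_gt.
have kd : kR <= d + 1.
  by rewrite /kR /k intrD; have := floor_le d; lra.
have [p [Sp hp]] := approx kR dk.
pose h := kR - xlast p.
have hpos : 0 < h by rewrite /h; lra.
pose dd := - g.
have Cdd : C dd := Cmg.
have Bdd w : Bf w dd = - dot e w by rewrite (Bsym' w dd) /dd dotNl eB.
have Qdd : Q dd = 0 by rewrite /dd mulmxN dotNl dotNr opprK Qg Q0.
pose du := dot u dd.
have dup : 0 < du by rewrite /du /dd dotNr oppr_gt0.
have edd : dot e dd = 0 by rewrite /dd dotNr -/Qinv Q0 oppr0.
pose z1 := (h / eps) *: u.
have ez1 : dot e z1 = h by rewrite /z1 dotZr eu divfK // gt_eqF.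
have uz1 : dot u z1 = h / eps by rewrite /z1 dotZr Hu mulr1.
have [KM [KM0 HKM]] := mx_bound M.
have Qup w : Q w <= (1 + KM) / 2 * dot w w.
  by have := AMGM w (M *m w); have := HKM w; have := dot_ge0 w; nra.
pose Nr : R := (n.+1)%:R.
have vbound (v : 'cV[R]_n.+1) : (forall i, -1 <= v i 0 <= 0) -> dot v v <= Nr.
  move=> hv; rewrite dotE.
  have -> : Nr = \sum_(i < n.+1) 1 by rewrite sumr_const card_ord.
  apply: ler_sum => i _; have := hv i; nra.
pose KQ := (1 + KM) / 2 * (2 * dot z1 z1 + 2 * Nr).
pose KU := (1 + Nr) / 2.
have Nr0 : 0 <= Nr by rewrite /Nr ler0n.
have KQ0 : 0 <= KQ.
  by rewrite /KQ mulr_ge0 //; [rewrite divr_ge0 //; lra | have := dot_ge0 z1; lra].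
have KU0 : 0 <= KU by rewrite /KU divr_ge0 //; lra.
have QvB (v : 'cV[R]_n.+1) : (forall i, -1 <= v i 0 <= 0) -> Q (z1 + v) <= KQ.
  move=> hv; have := Qup (z1 + v); have := vbound v hv.
  have := AMGM z1 v; rewrite !dotDl !dotDr (dotC v z1) /KQ.
  have := dot_ge0 (z1 + v); rewrite !dotDl !dotDr (dotC v z1).
  have : 0 <= (1 + KM) / 2 by rewrite divr_ge0 //; lra.
  nra.
have UvB (v : 'cV[R]_n.+1) : (forall i, -1 <= v i 0 <= 0) -> - KU <= dot u v.
  move=> hv; have := AMGM' u v; have := vbound v hv; rewrite Hu /KU; lra.
pose t := KQ / (2 * h) + KU / du.
have t2h : KQ <= 2 * t * h.
  have -> : 2 * t * h = KQ + 2 * h * (KU / du) by rewrite /t; field; rewrite !gt_eqF.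
  have : 0 <= KU / du by rewrite divr_ge0 // ltW.
  nra.
have tdu : KU <= t * du.
  have -> : t * du = KQ / (2 * h) * du + KU by rewrite /t; field; rewrite !gt_eqF.
  have : 0 <= KQ / (2 * h) by rewrite divr_ge0 //; lra.
  nra.
pose c := p + z1 + t *: dd.
have ec : c ord_max 0 = kR.
  rewrite -dot_delta -/e /c !dotDr -/z1 ez1 dotZr edd mulr0 addr0 -xlE /h; ring.
pose x : 'cV[R]_n.+1 := \col_i ((Num.floor (c i 0))%:~R).
pose v := x - c.
have fl (r : R) : -1 <= (Num.floor r)%:~R - r <= 0.
  have := floor_le r; have := floorD1_gt r; rewrite intrD; lra.
have hv i : -1 <= v i 0 <= 0 by rewrite /v /x !mxE; exact: fl.
have xlast_x : xlast x = kR by rewrite /xlast /x mxE ec intrKfloor.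
have ev : dot e v = 0.
  have xl := xlast_x; rewrite /xlast in xl; by rewrite dot_delta /v mxE xl [(- c) _ _]mxE ec subrr.
have xE : x = p + (z1 + v + t *: dd).
  by rewrite /v /c; apply/matrixP => i j; rewrite !mxE; ring.
have Cw : C (z1 + v + t *: dd).
  split.
    rewrite QD' QZ Qdd mulr0 addr0 BZr Bdd dotDr ez1 ev addr0.
    have := QvB v hv; nra.
  rewrite (dotDr u (z1 + v)) (dotDr u z1 v) uz1 dotZr -/du.
  have := UvB v hv; have : 0 <= h / eps by rewrite divr_ge0 // ltW.
  lra.
have Sx : S x by rewrite xE; apply: S_add.
have Ix : intpt x by move=> i; rewrite /x mxE intr_int.
rewrite Hd; apply: (@le_trans _ _ (kR%:E)).
  by apply: ereal_inf_lbound; exists x => //; rewrite xlast_x.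
by rewrite -EFinD lee_fin.
Qed.

End Core.


Unset Implicit Arguments.

Theorem mainTheorem17 (R : realType) (n : nat) (hn : (1 <= n)%N)
    (M : 'M[R]_n.+1) (beta : 'cV[R]_n.+1) (gamma : R)
    (lam : R) (u : 'cV[R]_n.+1) (s : bool) :
  M^T = M ->
  M \in unitmx ->
  (* lam is the unique negative eigenvalue, of (algebraic) multiplicity one *)
  lam < 0 ->
  mup lam (char_poly M) = 1%N ->
  (forall mu : R, mu < 0 -> eigenvalue M mu -> mu = lam) ->
  (* u is a unit eigenvector for lam *)
  M *m u = lam *: u ->
  (u^T *m u) 0 0 = 1 ->
  qstar M beta gamma <= 0 ->
  let S := branch M beta gamma u s in
  let dinf := inf_last S in
  (-oo < dinf)%E ->
  ~ (exists x, S x /\ (xlast x)%:E = dinf /\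
       forall y, S y -> (xlast y)%:E = dinf -> y = x) ->
  (inf_last (S `&` [set x | intpt x]) <= dinf + 1%:E)%E.
Proof.
have qf y : qform M y = dot y (M *m y) by rewrite /qform /dot mulmxA.
case: s => HMs HMu Hlam Hmup Hneg Heig Hu Hq S dinf Hfin Huniq.
  have HS x : S x <-> dot (x - center M beta) (M *m (x - center M beta)) <= qstar M beta gamma
      /\ Cc M u (x - center M beta).
    by rewrite /S /branch /coneC /Cc /= !qf.
  exact: (core HMs HMu Hlam Hmup Hneg Heig Hu Hq HS Hfin Huniq).
have Heig' : M *m (- u) = lam *: (- u) by rewrite mulmxN Heig scalerN.
have Hu' : dot (- u) (- u) = 1 by rewrite dotNl dotNr opprK.
have HS x : S x <-> dot (x - center M beta) (M *m (x - center M beta)) <= qstar M beta gamma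
    /\ Cc M (- u) (x - center M beta).
  rewrite /S /branch /coneC /Cc /= !qf mulmxN dotNl dotNr opprK.
  have -> : (u^T *m - (x - center M beta)) 0 0 = dot (- u) (x - center M beta).
    by rewrite dotNl -dotNr.
  by [].
exact: (core HMs HMu Hlam Hmup Hneg Heig' Hu' Hq HS Hfin Huniq).
Qed.
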